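(* Let $\varepsilon\in(0,\frac12)$ and $d\ge1$, and let $G$ be a graph with $|G|\ge \varepsilon^{-10d^2}$. Let $x:=\varepsilon^{5d}$. Assume that for every induced subgraph $F$ of $G$ with $|F|\ge \varepsilon^{d}|G|$, there exists $k\in[2,1/x]$ such that there is a pure or $x$-sparse $(k,|F|/k^d)$-blockade in $F$. Then there is an $(\varepsilon^{-1},{x^{2d}|G|})$-blockade $(B_1,\ldots,B_{\ell})$ in $G$, such that for all distinct $i,j\in[\ell]$, $(B_i,B_j)$ is either complete or weakly $\varepsilon^d$-sparse in $G$.
   Context: Graphs are finite and simple; $|G|$ is the number of vertices of $G$. A blockade in $G$ is a sequence $(B_1,\ldots,B_m)$ of disjoint subsets of $V(G)$, with length $m$ and width $\min_i|B_i|$; a $(k,w)$-blockade has length at least $k$ and width at least $w$. A pair $(A,B)$ of disjoint sets is complete if all edges between them are present, anticomplete if none are; a blockade is pure if every pair of its blocks is complete or anticomplete. For disjoint $A,B$, $B$ is $x$-sparse to $A$ if every vertex of $B$ has at most $x|A|$ neighbours in $A$; a blockade $(B_1,\ldots,B_m)$ is $x$-sparse if $B_j$ is $x$-sparse to $B_i$ for all $i<j$. $(A,B)$ is weakly $x$-sparse if the number of edges between $A$ and $B$ is at most $x|A||B|$. *)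

(* Defs.v *)
(* A graph is a symmetric irreflexive relation e on a finType T. *)
From HB Require Import structures.
From mathcomp Require Import all_boot all_order all_algebra.
Set Implicit Arguments. Unset Strict Implicit. Unset Printing Implicit Defensive.
Import Order.TTheory GRing.Theory Num.Theory.
Local Open Scope ring_scope.

Section Defs.
Variables (T : finType) (e : rel T).

Definition blockade (F : {set T}) (B : seq {set T}) : Prop :=
  (forall i, (i < size B)%N -> nth set0 B i \subset F) /\
  (forall i j, (i < j)%N -> (j < size B)%N ->
     [disjoint nth set0 B i & nth set0 B j]).

Definition width_ge (R : numDomainType) (B : seq {set T}) (w : R) : Prop :=
  forall i, (i < size B)%N -> w <= (#|nth set0 B i|)%:R.

Definition complete (A C : {set T}) : Prop :=
  forall a c, a \in A -> c \in C -> e a c.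

Definition anticomplete (A C : {set T}) : Prop :=
  forall a c, a \in A -> c \in C -> ~~ e a c.

Definition pure_blockade (B : seq {set T}) : Prop :=
  forall i j, (i < j)%N -> (j < size B)%N ->
    complete (nth set0 B i) (nth set0 B j) \/
    anticomplete (nth set0 B i) (nth set0 B j).

Definition sparse_to (R : numDomainType) (x : R) (C A : {set T}) : Prop :=
  forall v, v \in C -> (#|[set u in A | e v u]|)%:R <= x * (#|A|)%:R.

Definition sparse_blockade (R : numDomainType) (x : R) (B : seq {set T}) : Prop :=
  forall i j, (i < j)%N -> (j < size B)%N ->
    sparse_to x (nth set0 B j) (nth set0 B i).

Definition weakly_sparse (R : numDomainType) (x : R) (A C : {set T}) : Prop :=
  (#|[set p in setX A C | e p.1 p.2]|)%:R <= x * (#|A|)%:R * (#|C|)%:R.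

End Defs.

(* Main.v *)
Require Import Defs.
From HB Require Import structures.
From mathcomp Require Import all_boot all_order all_algebra.
From Stdlib Require Import Classical.
From mathcomp Require Import zify ring lra.
Import Order.TTheory GRing.Theory Num.Theory.
Local Open Scope ring_scope.
Set Implicit Arguments. Unset Strict Implicit. Unset Printing Implicit Defensive.

Section Aux.
Variables (T : finType) (e : rel T).
Hypothesis e_sym : symmetric e.

Definition edges (A C : {set T}) : nat := (\sum_(a in A) #|[set c in C | e a c]|)%N.

Lemma row_sum a (C : {set T}) : #|[set c in C | e a c]| = (\sum_(c in C) (e a c : nat))%N.
Proof.
rewrite -sum1_card (eq_bigl (fun c => (c \in C) && e a c)); last by move=> c; rewrite inE.
rewrite big_mkcondr /=; apply: eq_bigr => c _; by case: (e a c).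
Qed.

Lemma edgesE A C : edges A C = (\sum_(a in A) \sum_(c in C) (e a c : nat))%N.
Proof. by apply: eq_bigr => a _; rewrite row_sum. Qed.

Lemma edges_sym A C : edges A C = edges C A.
Proof.
rewrite !edgesE exchange_big /=; apply: eq_bigr => c _; apply: eq_bigr => a _.
by rewrite e_sym.
Qed.

Lemma edges_setX A C : #|[set p in setX A C | e p.1 p.2]| = edges A C.
Proof.
rewrite /edges.
rewrite (eq_bigr (fun a => \sum_(c | (c \in C) && e a c) 1)%N); last first.
  move=> a _; rewrite -sum1_card; apply: eq_bigl => c; by rewrite inE.
rewrite pair_big_dep /= sum1_card; apply: eq_card => p.
by rewrite !inE -andbA.
Qed.

Lemma card_bigcup_disj (I U : finType) (f : I -> {set U}) :
  (forall i j, i != j -> [disjoint f i & f j]) ->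
  #|\bigcup_i f i| = (\sum_i #|f i|)%N.
Proof.
move=> H; rewrite -sum1_card partition_disjoint_bigcup //.
by apply: eq_bigr => i _; rewrite sum1_card.
Qed.

End Aux.
Section Main.
Variables (R : realFieldType) (T : finType) (e : rel T).
Hypothesis e_sym : symmetric e.
Variables (eps : R) (d : nat).
Hypothesis eps_gt0 : 0 < eps.

Definition good (C D : {set T}) : Prop :=
  complete e C D \/ (edges e C D)%:R <= eps ^+ d * (#|C|)%:R * (#|D|)%:R.

Lemma good_sym C D : good C D -> good D C.
Proof.
case=> [Hc|Hs]; [left|right].
  by move=> a c aD cC; rewrite e_sym; apply: Hc.
by rewrite edges_sym // -mulrA [X in _ * X]mulrC mulrA.
Qed.

Lemma good_final C D : good C D -> complete e C D \/ weakly_sparse e (eps ^+ d) C D.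
Proof. case=> H; [by left | right; by rewrite /weakly_sparse edges_setX]. Qed.

Lemma cross (x : R) (Bi Bj C D : {set T}) : 0 <= x ->
  (complete e Bi Bj \/ anticomplete e Bi Bj \/ sparse_to e x Bj Bi) ->
  C \subset Bi -> D \subset Bj -> x * (#|Bi|)%:R <= eps ^+ d * (#|C|)%:R -> good C D.
Proof.
move=> x0 [Hc|[Ha|Hs]] sC sD Hx.
- left=> a c aC cD; apply: Hc; [exact: (subsetP sC) | exact: (subsetP sD)].
- right; rewrite edgesE big1; first by rewrite mulr_ge0 // mulr_ge0 // exprn_ge0 // ltW.
  move=> a aC; rewrite big1 // => c cD.
  by rewrite (negbTE (Ha a c (subsetP sC a aC) (subsetP sD c cD))).
- right; rewrite edges_sym // /edges natr_sum.
  apply: (@le_trans _ _ (\sum_(v in D) (x * (#|Bi|)%:R))).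
    apply: ler_sum => v vD; apply: le_trans (Hs v (subsetP sD v vD)).
    rewrite ler_nat; apply: subset_leq_card; apply/subsetP => u.
    by rewrite !inE => /andP[/(subsetP sC) -> ->].
  rewrite sumr_const -[X in X <= _]mulr_natr. by apply: ler_wpM2r.
Qed.

End Main.
Section Arith.
Variable R : realFieldType.

Lemma kpow (y k A : R) (d : nat) : 0 < y -> 0 < k -> k <= y^-1 -> 0 <= A ->
  y ^+ d * A <= A / k ^+ d.
Proof.
move=> y0 k0 ky A0; rewrite ler_pdivlMr ?exprn_gt0 //.
rewrite mulrAC -exprMn mulrC; apply: ler_piMr => //.
apply: exprn_ile1; first by rewrite mulr_ge0 // ltW.
by rewrite -(mulfV (lt0r_neq0 y0)); apply: ler_wpM2l => //; rewrite ltW.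
Qed.

Lemma expr_mono (y : R) (m n : nat) : 0 <= y -> y <= 1 -> (m <= n)%N -> y ^+ n <= y ^+ m.
Proof. by move=> y0 y1 mn; apply: ler_wiXn2l. Qed.

End Arith.
Section Main2.
Variables (R : realFieldType) (T : finType) (e : rel T).
Hypothesis e_sym : symmetric e.
Variables (eps : R) (d : nat).
Hypothesis eps_gt0 : 0 < eps.
Hypothesis eps_le1 : eps <= 1.
Hypothesis d_ge1 : (1 <= d)%N.
Let N : R := (#|T|)%:R.
Hypothesis N_gt0 : 0 < N.
Let x : R := eps ^+ (5 * d).

Definition witness (F : {set T}) (k : nat) (B : seq {set T}) : Prop :=
  (2 <= k)%N /\ k%:R <= x^-1 /\ blockade F B /\ (k <= size B)%N /\
  width_ge (R:=R) B ((#|F|)%:R / k%:R ^+ d) /\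
  (pure_blockade e B \/ sparse_blockade e x B).

Definition final : Prop :=
  exists B : seq {set T}, blockade [set: T] B /\
    eps^-1 <= (size B)%:R /\
    width_ge (R:=R) B (x ^+ (2 * d) * N) /\
    (forall i j, (i < size B)%N -> (j < size B)%N -> i != j ->
       complete e (nth set0 B i) (nth set0 B j) \/
       weakly_sparse e (eps ^+ d) (nth set0 B i) (nth set0 B j)).

Definition leaves (F : {set T}) (P : {set {set T}}) : Prop :=
  [/\ (forall C, C \in P -> C \subset F),
      (forall C D, C \in P -> D \in P -> C != D -> [disjoint C & D]),
      (forall C, C \in P -> eps ^+ (2 * d) * N <= (#|C|)%:R) &
      (forall C D, C \in P -> D \in P -> C != D -> good e eps d C D)].

Lemma x_gt0 : 0 < x. Proof. by rewrite exprn_gt0. Qed.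
Lemma eps0 : 0 <= eps. Proof. exact: ltW. Qed.
Lemma x_le_epsd : x <= eps ^+ d.
Proof. apply: expr_mono; rewrite ?eps0 //; lia. Qed.
Lemma x_le_eps : x <= eps.
Proof. rewrite -[X in _ <= X]expr1; apply: expr_mono; rewrite ?eps0 //. lia. Qed.

Lemma blk_rel F k B i j : witness F k B -> (i < j)%N -> (j < size B)%N ->
  complete e (nth set0 B i) (nth set0 B j) \/ anticomplete e (nth set0 B i) (nth set0 B j)
  \/ sparse_to e x (nth set0 B j) (nth set0 B i).
Proof.
move=> [_ [_ [_ [_ [_ [Hp|Hs]]]]]] ij js.
  by case: (Hp i j ij js) => H; [left|right; left].
by right; right; apply: Hs.
Qed.

Lemma leaf_cond (Bi C : {set T}) : eps ^+ (2 * d) * N <= (#|C|)%:R ->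
  x * (#|Bi|)%:R <= eps ^+ d * (#|C|)%:R.
Proof.
move=> HC; apply: (@le_trans _ _ (x * N)).
  by apply: ler_wpM2l; [exact: ltW x_gt0 | rewrite ler_nat max_card].
apply: (@le_trans _ _ (eps ^+ d * (eps ^+ (2 * d) * N))); last first.
  by apply: ler_wpM2l => //; rewrite exprn_ge0 // eps0.
rewrite mulrA -exprD; apply: ler_wpM2r; first exact: ltW.
apply: expr_mono; rewrite ?eps0 //. 
lia.
Qed.


Lemma early (F : {set T}) (k : nat) (B : seq {set T}) : eps ^+ d * N <= (#|F|)%:R -> witness F k B -> eps^-1 <= k%:R -> final.
Proof.
move=> HF W ek; have W' := W; move: W' => [k2 [kx [[bs bd] [kB [wd _]]]]].
have k0 : 0 < k%:R :> R by rewrite ltr0n; lia.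
exists B; split; [split => // i _; exact: subsetT|split].
  by apply: (le_trans ek); rewrite ler_nat.
split.
  move=> i iB; apply: le_trans (wd i iB).
  apply: (@le_trans _ _ (x ^+ d * (#|F|)%:R)); last first.
    by apply: (kpow d x_gt0 k0 kx); exact: ler0n.
  rewrite mul2n -addnn exprD -mulrA; apply: ler_wpM2l; first by rewrite exprn_ge0 // ltW // x_gt0.
  apply: le_trans HF; apply: ler_wpM2r; first exact: ltW.
  by apply: lerXn2r; [rewrite nnegrE ltW // x_gt0 | rewrite nnegrE eps0 | exact: x_le_eps].
have Hg : forall i j, (i < j)%N -> (j < size B)%N -> good e eps d (nth set0 B i) (nth set0 B j).
  move=> i j ij jB; apply: (@cross _ _ _ e_sym eps d eps_gt0 x (nth set0 B i) (nth set0 B j)) => //.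
  - exact: ltW x_gt0.
  - exact: blk_rel W ij jB.
  - by apply: ler_wpM2r => //; exact: x_le_epsd.
move=> i j iB jB ij; apply: good_final.
case: (ltngtP i j) => [lt|gt|eq]; first exact: Hg.
  by apply: good_sym => //; apply: Hg.
by rewrite eq eqxx in ij.
Qed.

Lemma leafpos (F C : {set T}) (P : {set {set T}}) : leaves F P -> C \in P -> (0 < #|C|)%N.
Proof.
move=> [_ _ Hc _] CP; have := Hc C CP; rewrite -(ltr0n R); apply: lt_le_trans.
by rewrite mulr_gt0 // exprn_gt0.
Qed.

Lemma union_step (F : {set T}) (k : nat) (B : seq {set T})
  (f : 'I_(size B) -> {set {set T}}) :
  witness F k B ->
  (forall i : 'I_(size B), leaves (nth set0 B i) (f i)) ->
  (forall i : 'I_(size B), (#|F|)%:R <= eps ^+ d * (k%:R * (#|f i|)%:R) ^+ d * N) ->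
  exists P, leaves F P /\ (#|F|)%:R <= eps ^+ d * (#|P|)%:R ^+ d * N.
Proof.
move=> W Hl He; have W' := W; move: W' => [k2 [kx [[bs bd] [kB [wd _]]]]].
have disjB : forall i j : 'I_(size B), i != j -> [disjoint nth set0 B i & nth set0 B j].
  move=> i j ij; case: (ltngtP i j) => [lt|gt|eq].
  - exact: bd.
  - by rewrite disjoint_sym; apply: bd.
  - by rewrite (val_inj eq) eqxx in ij.
have Hgood : forall (i j : 'I_(size B)) C D, (i < j)%N -> C \in f i -> D \in f j ->
    good e eps d C D.
  move=> i j C D ij Ci Dj; have [Hs _ Hc _] := Hl i; have [Hs' _ _ _] := Hl j.
  apply: (@cross _ _ _ e_sym eps d eps_gt0 x (nth set0 B i) (nth set0 B j)).
  - exact: ltW x_gt0.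
  - exact: blk_rel W ij (ltn_ord j).
  - exact: Hs.
  - exact: Hs'.
  - exact: leaf_cond (Hc C Ci).
exists (\bigcup_i f i); split; first split.
- move=> C /bigcupP[i _ Ci]; have [Hs _ _ _] := Hl i.
  exact: subset_trans (Hs C Ci) (bs i (ltn_ord i)).
- move=> C D /bigcupP[i _ Ci] /bigcupP[j _ Dj] CD.
  case: (eqVneq i j) => [eij|ij].
    by rewrite -eij in Dj; have [_ Hd _ _] := Hl i; apply: Hd.
  have [Hs _ _ _] := Hl i; have [Hs' _ _ _] := Hl j.
  exact: disjointWl (Hs C Ci) (disjointWr (Hs' D Dj) (disjB i j ij)).
- by move=> C /bigcupP[i _ Ci]; have [_ _ Hc _] := Hl i; apply: Hc.
- move=> C D /bigcupP[i _ Ci] /bigcupP[j _ Dj] CD.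
  case: (eqVneq i j) => [eij|ij].
    by rewrite -eij in Dj; have [_ _ _ Hd] := Hl i; apply: Hd.
  case: (ltngtP i j) => [lt|gt|eq].
  - exact: Hgood lt Ci Dj.
  - by apply: good_sym => //; apply: Hgood gt Dj Ci.
  - by rewrite (val_inj eq) eqxx in ij.
rewrite card_bigcup_disj; last first.
  move=> i j ij; rewrite -setI_eq0; apply/eqP/setP => C; rewrite !inE.
  apply/negP => /andP[Ci Cj].
  have [Hs _ _ _] := Hl i; have [Hs' _ _ _] := Hl j.
  have := disjointWl (Hs C Ci) (disjointWr (Hs' C Cj) (disjB i j ij)).
  move/disjoint_setI0; rewrite setIid => C0.
  by have := leafpos (Hl i) Ci; rewrite C0 cards0.
have m0 : (0 < size B)%N by lia.
case: (@arg_minnP _ (Ordinal m0) xpredT (fun i => #|f i|)) => // j _ Hj.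
apply: le_trans (He j) _; apply: ler_wpM2r; first exact: ltW.
apply: ler_wpM2l; first by rewrite exprn_ge0 // eps0.
apply: lerXn2r; rewrite ?nnegrE ?mulr_ge0 ?ler0n //.
rewrite -natrM ler_nat; apply: (@leq_trans (\sum_(i < size B) #|f j|)%N).
  by rewrite sum_nat_const card_ord leq_mul2r kB orbT.
by apply: leq_sum => i _; apply: Hj.
Qed.

Hypothesis hyp : forall F : {set T}, eps ^+ d * N <= (#|F|)%:R ->
  exists k, exists B, witness F k B.

Lemma main_ind : ~ final -> forall F : {set T}, eps ^+ d * N <= (#|F|)%:R ->
  exists P, leaves F P /\ (#|F|)%:R <= eps ^+ d * (#|P|)%:R ^+ d * N.
Proof.
move=> nf F; have [n] := ubnP #|F|; elim: n F => // n IH F Fn HF.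
have [k [B W]] := hyp HF; have W' := W; move: W' => [k2 [kx [[bs bd] [kB [wd _]]]]].
have k0 : 0 < k%:R :> R by rewrite ltr0n; lia.
case: (lerP eps^-1 k%:R) => ek; first by case: nf; exact: early HF W ek.
have keps : k%:R <= eps^-1 := ltW ek.
have wdF : forall i : 'I_(size B), (#|F|)%:R / k%:R ^+ d <= (#|nth set0 B i|)%:R :> R.
  by move=> i; exact: wd (ltn_ord i).
case: (ltP ((#|F|)%:R / k%:R ^+ d) (eps ^+ d * N)) => HA.
- apply: (@union_step F k B (fun i => [set nth set0 B i])) => //.
  + move=> i; split.
    * by move=> C; rewrite inE => /eqP ->.
    * by move=> C D; rewrite !inE => /eqP -> /eqP ->; rewrite eqxx.
    * move=> C; rewrite inE => /eqP ->; apply: le_trans (wdF i).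
      apply: (@le_trans _ _ (eps ^+ d * (#|F|)%:R)); last first.
        by apply: (kpow d eps_gt0 k0 keps); exact: ler0n.
      rewrite mul2n -addnn exprD -mulrA; apply: ler_wpM2l => //.
      by rewrite exprn_ge0 // eps0.
    * by move=> C D; rewrite !inE => /eqP -> /eqP ->; rewrite eqxx.
  + move=> i; rewrite cards1 mulr1; rewrite ltr_pdivrMr ?exprn_gt0 // in HA.
    by rewrite mulrAC; exact: ltW HA.
- have legal : forall i : 'I_(size B), eps ^+ d * N <= (#|nth set0 B i|)%:R.
    by move=> i; apply: le_trans HA (wdF i).
  have small : forall i : 'I_(size B), (#|nth set0 B i| < n)%N.
    move=> i; suff : (#|nth set0 B i| < #|F|)%N by lia.
    have [j ji] : exists j : 'I_(size B), j != i.
      case: (eqVneq (nat_of_ord i) 0%N) => i0.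
      - have h1 : (1 < size B)%N by lia.
        by exists (Ordinal h1); apply/eqP => /(congr1 val) /=; rewrite i0.
      - have h0 : (0 < size B)%N by lia.
        exists (Ordinal h0); apply/eqP => /(congr1 val) /= H.
        by rewrite -H eqxx in i0.
    have Bj0 : (0 < #|nth set0 B j|)%N.
      rewrite -(ltr0n R); apply: lt_le_trans (legal j).
      by rewrite mulr_gt0 // exprn_gt0.
    have dij : [disjoint nth set0 B i & nth set0 B j].
      case: (ltngtP i j) => [lt|gt|eq].
      - exact: bd.
      - by rewrite disjoint_sym; apply: bd.
      - by rewrite (val_inj eq) eqxx in ji.
    have sU : nth set0 B i :|: nth set0 B j \subset F by rewrite subUset !bs.
    have := subset_leq_card sU.
    rewrite cardsU (disjoint_setI0 dij) cards0 subn0; lia.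
  have : forall i : 'I_(size B), exists P, leaves (nth set0 B i) P /\
      (#|nth set0 B i|)%:R <= eps ^+ d * (#|P|)%:R ^+ d * N.
    by move=> i; apply: IH.
  move/fin_all_exists => [f Hf].
  apply: (@union_step F k B f W) => i; first by have [] := Hf i.
  have [_ Hi] := Hf i.
  have := wdF i; rewrite ler_pdivrMr ?exprn_gt0 // => H1.
  apply: (le_trans H1); apply: le_trans (ler_wpM2r _ Hi) _.
    by rewrite exprn_ge0 // ltW.
  by rewrite exprMn le_eqVlt; apply/orP; left; apply/eqP; ring.
Qed.

End Main2.

Unset Implicit Arguments.

Theorem theorem6p1 (R : realFieldType) (T : finType) (e : rel T)
  (e_sym : symmetric e) (e_irr : irreflexive e) (eps : R) (d : nat) :
  0 < eps -> eps < 1 / 2 -> (1 <= d)%N ->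
  eps ^- (10 * d ^ 2) <= (#|T|)%:R ->
  (forall F : {set T}, eps ^+ d * (#|T|)%:R <= (#|F|)%:R ->
     exists k : nat, (2 <= k)%N /\ k%:R <= (eps ^+ (5 * d))^-1 /\
       exists B : seq {set T}, blockade F B /\ (k <= size B)%N /\
         width_ge (R:=R) B ((#|F|)%:R / k%:R ^+ d) /\
         (pure_blockade e B \/ sparse_blockade e (eps ^+ (5 * d)) B)) ->
  exists B : seq {set T}, blockade [set: T] B /\
    eps^-1 <= (size B)%:R /\
    width_ge (R:=R) B ((eps ^+ (5 * d)) ^+ (2 * d) * (#|T|)%:R) /\
    (forall i j, (i < size B)%N -> (j < size B)%N -> i != j ->
       complete e (nth set0 B i) (nth set0 B j) \/
       weakly_sparse e (eps ^+ d) (nth set0 B i) (nth set0 B j)).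
Proof.
move=> eps0 eps_half d1 HN hyp.
have eps1 : eps <= 1 by lra.
have N0 : 0 < (#|T|)%:R :> R.
  by apply: lt_le_trans HN; rewrite invr_gt0 exprn_gt0.
have hyp' : forall F : {set T}, eps ^+ d * (#|T|)%:R <= (#|F|)%:R ->
    exists k B, witness e eps d F k B.
  move=> F HF; have [k [k2 [kx [B [bl [kB [wd ps]]]]]]] := hyp F HF.
  by exists k, B.
case: (classic (final e eps d)) => [[B HB]|nf]; first by exists B.
have legal : eps ^+ d * (#|T|)%:R <= (#|[set: T]|)%:R.
  by rewrite cardsT; apply: ler_piMl; [exact: ltW | exact: exprn_ile1 (ltW eps0) eps1].
have [P [[Hs Hd Hc Hg] Hcard]] := main_ind e_sym eps0 eps1 d1 N0 hyp' nf legal.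
exfalso; apply: nf.
have memP : forall i, (i < size (enum P))%N -> nth set0 (enum P) i \in P.
  by move=> i iP; rewrite -mem_enum; apply: mem_nth.
have neqP : forall i j, (i < size (enum P))%N -> (j < size (enum P))%N -> i != j ->
    nth set0 (enum P) i != nth set0 (enum P) j.
  by move=> i j iP jP ij; rewrite nth_uniq // enum_uniq.
exists (enum P); split; [split|split].
- by move=> i _; exact: subsetT.
- move=> i j ij jP; apply: Hd; rewrite ?memP //; first exact: ltn_trans ij jP.
  by apply: neqP => //; [exact: ltn_trans ij jP | rewrite ltn_eqF].
- rewrite -cardE.
  have H1 : 1 <= (eps * (#|P|)%:R) ^+ d.
    by rewrite exprMn -(ler_pM2r N0) mul1r; rewrite cardsT in Hcard.
  have H2 : 1 <= eps * (#|P|)%:R.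
    rewrite leNgt; apply/negP => H; move: H1; rewrite leNgt => /negP; apply.
    have p0 : 0 <= eps * (#|P|)%:R by apply: mulr_ge0; [exact: ltW | exact: ler0n].
    by rewrite (exprn_ilt1 _ p0 H) -lt0n.
  by rewrite -[eps^-1]mulr1 ler_pdivrMl.
split.
- move=> i iP; apply: le_trans (Hc _ (memP i iP)); apply: ler_wpM2r; first exact: ltW.
  rewrite -exprM; apply: ler_wiXn2l; [exact: ltW | exact: eps1 | rewrite /=; apply: leq_pmull; lia].
- move=> i j iP jP ij; apply: (good_final (eps := eps)).
  by apply: Hg; rewrite ?memP //; apply: neqP.
Qed.
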